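(* Let $A$ be a finite-dimensional real algebra with identity $e$ in which every subalgebra generated by a single element is associative, and let $(p^{[n]}(t))_{n\in\mathbb N}$, $p^{[n]}(t)=\sum_{k=0}^\infty a_k^{[n]}t^k$, be any sequence of real power series with $\sum_{k}|a_k^{[n]}|<\infty$ for each $n$ and $\lim_{n\to\infty}\sup\{|a_k^{[n]}|:k\ge1\}=0$. If $x\in A$ and $\lim_{n\to\infty}x^n=x_0$, then $\lim_{n\to\infty}p^{[n]}(x)$ exists if and only if $\lim_{n\to\infty}\big[a_0^{[n]}e+(p^{[n]}(1)-a_0^{[n]})x_0\big]$ exists, and in that case $$\lim_{n\to\infty}p^{[n]}(x)=\lim_{n\to\infty}\big[a_0^{[n]}e+(p^{[n]}(1)-a_0^{[n]})x_0\big].$$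
   Context: $A$ carries the Euclidean topology; $p^{[n]}(x)=a_0^{[n]}e+\sum_{k\ge1}a_k^{[n]}x^k$ and $p^{[n]}(1)=\sum_{k\ge0}a_k^{[n]}$. The sequence $(p^{[n]})$ is arbitrary (not necessarily iterates). *)

(* Defs.v *)
From HB Require Import structures.
From mathcomp Require Import all_boot all_order all_algebra.
From mathcomp Require Import all_classical all_reals all_analysis.
Set Implicit Arguments. Unset Strict Implicit. Unset Printing Implicit Defensive.
Import Order.TTheory GRing.Theory Num.Theory.
Import numFieldNormedType.Exports.
Local Open Scope classical_set_scope.
Local Open Scope ring_scope.

(* A finite-dimensional real algebra of dimension d is modelled on the
   underlying space 'rV[R]_d (Euclidean topology) with a bilinear,
   not necessarily associative, multiplication [mul]. *)

Definition bilinear_mul (R : realType) (d : nat)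
  (mul : 'rV[R]_d -> 'rV[R]_d -> 'rV[R]_d) : Prop :=
  (forall (a : R) x y z, mul (a *: x + y) z = a *: mul x z + mul y z) /\
  (forall (a : R) x y z, mul z (a *: x + y) = a *: mul z x + mul z y).

Definition is_identity (R : realType) (d : nat)
  (mul : 'rV[R]_d -> 'rV[R]_d -> 'rV[R]_d) (e : 'rV[R]_d) : Prop :=
  forall x, mul e x = x /\ mul x e = x.

Definition is_subalgebra (R : realType) (d : nat)
  (mul : 'rV[R]_d -> 'rV[R]_d -> 'rV[R]_d) (S : set 'rV[R]_d) : Prop :=
  S 0 /\ (forall (a : R) x y, S x -> S y -> S (a *: x + y)) /\
  (forall x y, S x -> S y -> S (mul x y)).

Definition gen_subalg (R : realType) (d : nat)
  (mul : 'rV[R]_d -> 'rV[R]_d -> 'rV[R]_d) (x : 'rV[R]_d) : set 'rV[R]_d :=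
  fun y => forall S, is_subalgebra mul S -> S x -> S y.

Definition power_associative (R : realType) (d : nat)
  (mul : 'rV[R]_d -> 'rV[R]_d -> 'rV[R]_d) : Prop :=
  forall x y z w, gen_subalg mul x y -> gen_subalg mul x z -> gen_subalg mul x w ->
    mul (mul y z) w = mul y (mul z w).

Fixpoint apow (R : realType) (d : nat)
  (mul : 'rV[R]_d -> 'rV[R]_d -> 'rV[R]_d) (e x : 'rV[R]_d) (k : nat) : 'rV[R]_d :=
  match k with
  | 0%N => e
  | k'.+1 => mul x (apow mul e x k')
  end.

Definition pseries_eval (R : realType) (d : nat)
  (mul : 'rV[R]_d -> 'rV[R]_d -> 'rV[R]_d) (e x : 'rV[R]_d) (a : nat -> R) : 'rV[R]_d :=
  a 0%N *: e + limn (series (fun k => a k.+1 *: apow mul e x k.+1)).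

Definition pseries_at1 (R : realType) (a : nat -> R) : R :=
  limn (series a).

(* Main.v *)
Require Import Defs.
From HB Require Import structures.
From mathcomp Require Import all_boot all_order all_algebra.
From mathcomp Require Import all_classical all_reals all_analysis.
From mathcomp Require Import ring lra.
Local Open Scope ring_scope.
Import Order.TTheory GRing.Theory Num.Theory.
Import numFieldNormedType.Exports.
Local Open Scope classical_set_scope.
Local Open Scope ring_scope.

Lemma entry_le (R : realType) d (u : 'rV[R]_d) i : `|u 0 i| <= `|u|.
Proof. rewrite [X in _ <= X]mx_normrE. exact: (le_bigmax _ _ (0, i)). Qed.

Section M.
Variables (R : realType) (d : nat) (mul : 'rV[R]_d -> 'rV[R]_d -> 'rV[R]_d).
Hypothesis hb : bilinear_mul mul.

Lemma mul0l z : mul 0 z = 0.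
Proof.
have := hb.1 1 0 0 z; rewrite !scale1r add0r => h.
apply: (addIr (mul 0 z)); by rewrite add0r -h.
Qed.
Lemma mul0r z : mul z 0 = 0.
Proof.
have := hb.2 1 0 0 z; rewrite !scale1r add0r => h.
apply: (addIr (mul z 0)); by rewrite add0r -h.
Qed.
Lemma mulDl u v z : mul (u + v) z = mul u z + mul v z.
Proof. by have := hb.1 1 u v z; rewrite !scale1r. Qed.
Lemma mulDr u v z : mul z (u + v) = mul z u + mul z v.
Proof. by have := hb.2 1 u v z; rewrite !scale1r. Qed.
Lemma mulZl a u z : mul (a *: u) z = a *: mul u z.
Proof. by have := hb.1 a u 0 z; rewrite !addr0 mul0l addr0. Qed.
Lemma mulZr a u z : mul z (a *: u) = a *: mul z u.
Proof. by have := hb.2 a u 0 z; rewrite !addr0 mul0r addr0. Qed.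
Lemma mulBl u v z : mul (u - v) z = mul u z - mul v z.
Proof. by rewrite mulDl -scaleN1r mulZl scaleN1r. Qed.
Lemma mulBr u v z : mul z (u - v) = mul z u - mul z v.
Proof. by rewrite mulDr -scaleN1r mulZr scaleN1r. Qed.
Lemma mulsuml I (r : seq I) (F : I -> _) z :
  mul (\sum_(i <- r) F i) z = \sum_(i <- r) mul (F i) z.
Proof. exact: (big_morph (fun u => mul u z) (fun u v => mulDl u v z) (mul0l z)). Qed.
Lemma mulsumr I (r : seq I) (F : I -> _) z :
  mul z (\sum_(i <- r) F i) = \sum_(i <- r) mul z (F i).
Proof. exact: (big_morph (fun u => mul z u) (fun u v => mulDr u v z) (mul0r z)). Qed.

Lemma mul_bound : exists C : R, 0 <= C /\ forall u v, `|mul u v| <= C * `|u| * `|v|.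
Proof.
exists (\sum_(i < d) \sum_(j < d) `|mul 'e_i 'e_j|); split.
  by apply: sumr_ge0 => i _; apply: sumr_ge0.
move=> u v.
rewrite [u in mul u]row_sum_delta [v in mul _ v]row_sum_delta mulsuml.
apply: le_trans (ler_norm_sum _ _ _) _; rewrite mulr_suml mulr_suml; apply: ler_sum => i _.
rewrite mulZl mulsumr scaler_sumr -mulrA mulr_suml.
apply: le_trans (ler_norm_sum _ _ _) _; apply: ler_sum => j _.
rewrite mulZr scalerA normrZ normrM mulrC.
apply: ler_wpM2l => //.
by apply: ler_pM => //; exact: entry_le.
Qed.
End M.
Lemma cvg_dom (R : realType) (V : normedModType R) (f g : nat -> V) l gl (C : R) :
  0 <= C -> (forall m, `|gl - g m| <= C * `|l - f m|) ->
  f @ \oo --> l -> g @ \oo --> gl.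
Proof.
move=> C0 hb /cvgrPdist_lt hf; apply/cvgrPdist_lt => eps he.
have C1 : 0 < C + 1 by rewrite ltr_wpDl.
move: (hf (eps / (C + 1)) (divr_gt0 he C1)); apply: filterS => m hm.
apply: (le_lt_trans (hb m)); apply: (@le_lt_trans _ _ ((C + 1) * `|l - f m|)).
  by rewrite ler_wpM2r // lerDl.
by rewrite -ltr_pdivlMl // mulrC.
Qed.

Section P.
Variables (R : realType) (d : nat) (mul : 'rV[R]_d -> 'rV[R]_d -> 'rV[R]_d) (e x x0 : 'rV[R]_d).
Hypothesis hb : bilinear_mul mul.
Hypothesis he : is_identity mul e.
Hypothesis hp : power_associative mul.
Hypothesis hx : (fun n => apow mul e x n) @ \oo --> x0.
Local Notation X := (apow mul e x).

Lemma apow_gen k : gen_subalg mul x (X k.+1).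
Proof.
move=> S [_ [_ hS]] Sx; elim: k => [|k IH] /=; first by rewrite (he x).2.
exact: hS.
Qed.

Lemma apowD k m : X (k + m) = mul (X k) (X m).
Proof.
elim: k => [|k IH] /=; first by rewrite (he _).1.
rewrite IH; case: k IH => [|k] IH /=.
  by rewrite (he _).1 (he x).2.
case: m IH => [|m] IH.
  by rewrite !(he _).2.
by rewrite (hp x x _ _ (fun S _ Sx => Sx) (apow_gen k) (apow_gen m)).
Qed.

Lemma mul_x0_l k : mul (X k) x0 = x0.
Proof.
have [C [C0 hC]] := @mul_bound _ _ _ hb.
have h1 : (fun m => mul (X k) (X m)) @ \oo --> mul (X k) x0.
  apply: (@cvg_dom _ _ _ _ _ _ (C * `|X k|)) hx; first exact: mulr_ge0.
  by move=> m; rewrite -mulBr // hC.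
have h2 : (fun m => mul (X k) (X m)) @ \oo --> x0.
  have := hx; rewrite -(cvg_shiftn k); apply: cvg_trans.
  by apply: near_eq_cvg; near=> m; rewrite /= addnC apowD.
by rewrite -(norm_cvg_lim h1) (norm_cvg_lim h2).
Unshelve. all: by end_near.
Qed.

Lemma mul_x0_r (u : 'rV[R]_d) : (fun k => mul (X k) u) @ \oo --> mul x0 u.
Proof.
have [C [C0 hC]] := @mul_bound _ _ _ hb.
apply: (@cvg_dom _ _ _ _ _ _ (C * `|u|)) hx; first exact: mulr_ge0.
by move=> m; rewrite -mulBl // (le_trans (hC _ _)) // mulrAC.
Qed.

Lemma mul_x0_r' m : mul x0 (X m) = x0.
Proof.
have h2 : (fun k => mul (X k) (X m)) @ \oo --> x0.
  have := hx; rewrite -(cvg_shiftn m); apply: cvg_trans.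
  by apply: near_eq_cvg; near=> k; rewrite /= apowD.
by rewrite -(norm_cvg_lim (mul_x0_r (X m))) (norm_cvg_lim h2).
Unshelve. all: by end_near.
Qed.

Lemma mul_x0_x0 : mul x0 x0 = x0.
Proof.
have h2 : (fun k => mul (X k) x0) @ \oo --> x0.
  have -> : (fun k => mul (X k) x0) = fun _ => x0.
    by apply: funext => k; rewrite mul_x0_l.
  exact: cvg_cst.
by rewrite -(norm_cvg_lim (mul_x0_r x0)) (norm_cvg_lim h2).
Qed.

Lemma zmul k m : X (k + m) - x0 = mul (X k - x0) (X m - x0).
Proof.
by rewrite mulBl // !mulBr // mul_x0_l mul_x0_r' mul_x0_x0 apowD subrr subr0.
Qed.

Lemma zsum_bound : exists B : R, forall n, \sum_(k < n) `|X k - x0| <= B.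
Proof.
have [C [C0 hC]] := @mul_bound _ _ _ hb.
have C1 : 0 < C + 1 by rewrite ltr_wpDl.
move/cvgrPdist_lt: hx => /(_ (2^-1 / (C + 1))).
have : 0 < 2^-1 / (C + 1) :> R by rewrite divr_gt0.
move=> /[swap] /[apply] -[N _ hN].
have hz : C * `|X N - x0| <= 2^-1.
  have := hN N (leqnn N); rewrite /= distrC => h.
  apply: (@le_trans _ _ ((C + 1) * `|X N - x0|)).
    by rewrite ler_wpM2r // lerDl.
  by rewrite -ler_pdivlMl // mulrC ltW.
set s := fun k => `|X k - x0|.
set S0 := \sum_(k < N) s k.
exists (2 * S0) => n.
have h1 : \sum_(k < N + n) s k <= S0 + 2^-1 * \sum_(k < n) s k.
  rewrite big_split_ord lerD // mulr_sumr; apply: ler_sum => i _ /=.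
  rewrite /s zmul (le_trans (hC _ _)) // ler_wpM2r //.
have h2 : \sum_(k < n) s k <= \sum_(k < N + n) s k.
  rewrite addnC big_split_ord /= lerDl; apply: sumr_ge0 => i _; exact: normr_ge0.
have := le_trans h2 h1; set T := \sum_(k < n) s k => h.
lra.
Qed.
End P.

Lemma normed_cvg_rV (R : realType) d (u_ : nat -> 'rV[R]_d) : cvgn (series (fun k => `|u_ k|)) -> cvgn (series u_).
Proof.
move=> /cauchy_cvgP/cauchy_seriesP u_ncvg.
apply/cauchy_cvgP/cauchy_seriesP => e /u_ncvg.
apply: filterS => n /=; rewrite ger0_norm ?sumr_ge0//.
by apply: le_lt_trans; apply: ler_norm_sum.
Qed.

Section Q.
Variables (R : realType) (d : nat) (mul : 'rV[R]_d -> 'rV[R]_d -> 'rV[R]_d) (e x x0 : 'rV[R]_d).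
Local Notation X := (apow mul e x).

Lemma diff_bound (b : nat -> R) (B : R) :
  (forall n, \sum_(k < n) `|X k - x0| <= B) -> cvgn (series (fun k => `|b k|)) ->
  let w := fun k => b k.+1 *: (X k.+1 - x0) in
  let sn := sup (range (fun k => `|b k.+1|)) in
  [/\ `|limn (series w)| <= sn * B &
   b 0%N *: e + limn (series (fun k => b k.+1 *: X k.+1)) =
   b 0%N *: e + (limn (series b) - b 0%N) *: x0 + limn (series w)].
Proof.
move=> hB hbc w sn.
have B0 : 0 <= B by have := hB 0%N; rewrite big_ord0.
have hub : forall k, `|b k.+1| <= sn.
  have hbd : has_ubound (range (fun k => `|b k.+1|)).
    exists (limn (series (fun k => `|b k|))) => y [k _ <-].
    apply: le_trans (nondecreasing_cvgn_le _ hbc k.+2).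
      rewrite /series /= big_nat_recr //= lerDr.
      by apply: sumr_ge0 => i _.
    by apply: nondecreasing_series => i _ _.
  by move=> k; apply: ub_le_sup => //; exists k.
have sn0 : 0 <= sn by apply: le_trans (hub 0%N).
have hnb : forall m, series (fun k => `|w k|) m <= sn * B.
  move=> m; rewrite /series /= /w.
  apply: (@le_trans _ _ (\sum_(0 <= k < m) sn * `|X k.+1 - x0|)).
    by apply: ler_sum => k _; rewrite normrZ ler_wpM2r.
  rewrite -mulr_sumr ler_wpM2l //; apply: le_trans (hB m.+1).
  rewrite big_ord_recl /= big_mkord lerDr //.
have hnc : cvgn (series (fun k => `|w k|)).
  apply: nondecreasing_is_cvgn.
    by apply: nondecreasing_series => i _ _.
  by exists (sn * B) => y [m _ <-].
have hwc : cvgn (series w) by apply: normed_cvg_rV.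
split.
  rewrite -lim_norm //; apply: limr_le; first exact: is_cvg_norm.
  apply: nearW => m /=; apply: le_trans (hnb m).
  by rewrite /series /=; apply: ler_norm_sum.
have hbc' : cvgn (series b) by apply: normed_cvg.
have hU : series (fun k => b k.+1 *: X k.+1) =
    (fun m => series w m + (series b m.+1 - b 0%N) *: x0).
  apply: funext => m; rewrite /series /= big_nat_recl //= [b 0%N + _]addrC addrK.
  rewrite scaler_suml -big_split /=; apply: eq_bigr => k _.
  by rewrite /w scalerBr subrK.
have hL : series (fun k => b k.+1 *: X k.+1) @ \oo -->
    limn (series w) + (limn (series b) - b 0%N) *: x0.
  rewrite hU; apply: cvgD => //; apply: cvgZ; last exact: cvg_cst.
  apply: cvgB; last exact: cvg_cst.
  by rewrite (cvg_shiftS (fun m => series b m)).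
rewrite (norm_cvg_lim hL).
by rewrite [limn (series w) + _]addrC addrA.
Qed.
End Q.

Lemma cvg_domR (R : realType) (V : normedModType R) (f : nat -> R) (g : nat -> V) gl (C : R) :
  0 <= C -> (forall m, `|gl - g m| <= C * `|f m|) ->
  f @ \oo --> (0 : R) -> g @ \oo --> gl.
Proof.
move=> C0 hb /cvgrPdist_lt hf; apply/cvgrPdist_lt => eps he.
have C1 : 0 < C + 1 by rewrite ltr_wpDl.
move: (hf (eps / (C + 1)) (divr_gt0 he C1)); apply: filterS => m.
rewrite sub0r normrN => hm.
apply: (le_lt_trans (hb m)); apply: (@le_lt_trans _ _ ((C + 1) * `|f m|)).
  by rewrite ler_wpM2r // lerDl.
by rewrite -ltr_pdivlMl // mulrC.
Qed.

Theorem lemma2 (R : realType) (d : nat)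
  (mul : 'rV[R]_d -> 'rV[R]_d -> 'rV[R]_d) (e : 'rV[R]_d)
  (a : nat -> nat -> R) (x x0 : 'rV[R]_d) :
  bilinear_mul mul -> is_identity mul e -> power_associative mul ->
  (forall n, cvgn (series (fun k => `|a n k|))) ->
  (fun n => sup (range (fun k => `|a n k.+1|))) @ \oo --> (0 : R) ->
  (fun n => apow mul e x n) @ \oo --> x0 ->
  let P := fun n => pseries_eval mul e x (a n) in
  let Q := fun n => a n 0%N *: e + (pseries_at1 (a n) - a n 0%N) *: x0 in
  (cvgn P <-> cvgn Q) /\ (cvgn Q -> limn P = limn Q).
Proof.
move=> hb he hp habs hsup hx P Q.
have [B hB] : exists B, forall n, \sum_(k < n) `|apow mul e x k - x0| <= B.
  by apply: zsum_bound.
have B0 : 0 <= B by have := hB 0%N; rewrite big_ord0.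
pose D n := limn (series (fun k => a n k.+1 *: (apow mul e x k.+1 - x0))).
have hD : forall n, P n = Q n + D n /\
    `|D n| <= sup (range (fun k => `|a n k.+1|)) * B.
  move=> n; have [h1 h2] := @diff_bound _ _ mul e x x0 (a n) B hB (habs n).
  by rewrite /P /Q /pseries_eval /pseries_at1 h2.
have Dcvg : D @ \oo --> 0.
  apply: (@cvg_domR _ _ _ D 0 B B0) hsup => m.
  by rewrite sub0r normrN (le_trans (hD m).2) // mulrC ler_wpM2l // ler_norm.
have PQ : P = Q + D by apply: funext => n; rewrite (hD n).1.
have DC : cvgn D by apply: cvgP Dcvg.
split; first split => h.
- have -> : Q = P - D by rewrite PQ addrK.
  exact: is_cvgB.
- rewrite PQ; exact: is_cvgD.
- move=> hQ; rewrite PQ limD // (norm_cvg_lim Dcvg) addr0 //.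
Qed.
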